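(* Let $p$ be a prime, let $G$ be a group of order $p^5$, and let $\alpha\in\mathrm{Aut}(G)$ have order $p$. Let $P=G\rtimes\langle\alpha\rangle$ and suppose $P''\neq 1$. Then $P$ has derived length $3$ and $\mathrm{cd}(P)=\{1,p,p^2\}$.
   Context: $P''$ denotes the second derived subgroup $[P',P']$. For a finite group $X$, $\mathrm{cd}(X)=\{\chi(1)\mid \chi\in\mathrm{Irr}(X)\}$ is the set of degrees of the complex irreducible characters of $X$. *)

(* Defs.v *)
From HB Require Import structures.
From mathcomp Require Import all_boot all_order all_algebra all_fingroup all_solvable all_field all_character.
Set Implicit Arguments. Unset Strict Implicit. Unset Printing Implicit Defensive.
Import GRing.Theory Num.Theory.

Local Open Scope group_scope.

Definition cd (gT : finGroupType) (X : {group gT}) : pred algC :=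
  [pred x : algC | [exists i : Iirr X, ('chi[X]_i 1%g == x)%R]].

Definition has_derived_length (gT : finGroupType) (X : {group gT}) (n : nat) : bool :=
  (X^`(n) == 1) && [forall m : 'I_n, X^`(m) != 1].

(* Main.v *)
Require Import Defs.
From HB Require Import structures.
From mathcomp Require Import all_boot all_order all_algebra all_fingroup all_solvable all_field all_character.
From mathcomp Require Import zify.
Set Implicit Arguments. Unset Strict Implicit. Unset Printing Implicit Defensive.
Import GRing.Theory Num.Theory.
Local Open Scope group_scope.

Lemma L1 (gT : finGroupType) (p : nat) (X : {group gT}) :
  p.-group X -> ~~ abelian X -> (p ^ 2 %| #|X : X^`(1)|)%N.
Proof.
move=> pX nabX.
have ntX : X :!=: 1 by apply: contra nabX => /eqP->; exact: abelian1.
have [p_pr _ _] := pgroup_pdiv pX ntX.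
have pI : p.-nat #|X : X^`(1)| := pnat_dvd (dvdn_indexg _ _) pX.
have [k Hk] := p_natP pI.
case: (leqP 2 k) => hk; first by rewrite Hk dvdn_exp2l.
exfalso; move/negP: nabX; apply.
apply: cyclic_abelian.
apply: (cyclic_nilpotent_quo_der1_cyclic (pgroup_nil pX)).
apply: (dvdn_prime_cyclic p_pr).
rewrite card_quotient ?der_norm // Hk.
by case: k hk {Hk} => [|[|]].
Qed.

Lemma L2 (gT : finGroupType) (p : nat) (P : {group gT}) :
  prime p -> p.-group P -> #|P| = (p ^ 6)%N -> P^`(3) = 1.
Proof.
move=> p_pr pP oP; apply/eqP; apply: contraT => nt3.
have nab k : P^`(k.+1) != 1 -> ~~ abelian P^`(k).
  by move=> ntk; apply/negP => /derG1P; move=> h; move: ntk; rewrite dergSn -derg1 h eqxx.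
have nt2 : P^`(2) != 1.
  apply: contra nt3 => /eqP e; rewrite -subG1 -e.
  exact: (der_sub 1 P^`(2)).
have nt1 : P^`(1) != 1.
  apply: contra nt2 => /eqP e; rewrite -subG1 -e.
  exact: (der_sub 1 P^`(1)).
have pk k : p.-group P^`(k) := pgroupS (der_sub k P) pP.
have d0 := L1 (pk 0) (nab 0 nt1).
have d1 := L1 (pk 1%N) (nab 1%N nt2).
have d2 := L1 (pk 2) (nab 2 nt3).
have [_ d3 _] := pgroup_pdiv (pk 3) nt3.
have e : #|P| = (#|P^`(3)| * #|P^`(2) : P^`(3)| * #|P^`(1) : P^`(2)| * #|P^`(0) : P^`(1)|)%N.
  rewrite Lagrange; last exact: (der_sub 1 P^`(2)).
  rewrite Lagrange; last exact: (der_sub 1 P^`(1)).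
  by rewrite Lagrange; last exact: (der_sub 1 P^`(0)).
have : (p ^ 7 %| p ^ 6)%N.
  rewrite -oP e (_ : 7 = 1 + 2 + 2 + 2)%N // !expnD expn1.
  by rewrite !dvdn_mul.
by rewrite dvdn_Pexp2l ?prime_gt1.
Qed.

Local Open Scope ring_scope.

Lemma M0 (gT : finGroupType) (p : nat) (X : {group gT}) (i : Iirr X) :
  prime p -> p.-group X -> cfaithful 'chi_i -> 'chi_i 1%g = p%:R ->
  (X^`(2) \subset [1 gT])%g.
Proof.
move=> p_pr pX ffi chi1.
have nabX : ~~ abelian X.
  apply/negP => /char_abelianP /(_ i) /lin_char1; rewrite chi1 => /eqP.
  by rewrite pnatr_eq1 => /eqP hp; move: p_pr; rewrite hp.
have [A maxA _] := @maxgroup_exists _ [pred A : {group gT} | (A <| X) && abelian A] 1%G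
   (introT andP (conj (normal1 X) (abelian1 gT))).
have scnA := max_SCN pX maxA.
have [nsAX cA] := SCN_P scnA.
have abA := SCN_abelian scnA.
have sAX := normal_sub nsAX.
have nsubZ : ~~ (A \subset 'Z(X)).
  apply: contra nabX => sAZ.
  have eXA : A :=: X.
    rewrite -cA; apply/setIidPl; rewrite centsC.
    exact: subset_trans sAZ (subsetIr _ _).
  by rewrite -eXA.
have [t tA] := constt_cfRes_irr A i.
have notI : ~~ (X \subset 'I['chi_t]).
  apply: contra nsubZ => IX.
  have linT : 'chi_t \is a linear_char by apply/char_abelianP.
  have eRes := Clifford_Res_sum_cfclass nsAX tA.
  rewrite cfclass_invariant // big_seq1 in eRes.
  rewrite -(cfcenter_fful_irr ffi).
  apply/subsetP => x Ax.
  have Xx : x \in X := subsetP sAX x Ax.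
  rewrite /cfcenter irr_char inE Xx /=.
  set e := '['Res[A] 'chi_i, 'chi_t] in eRes.
  have h1 : 'chi_i x = (e * 'chi_t x)%R.
    by rewrite -(cfResE _ sAX Ax) eRes cfunE.
  have h2 : 'chi_i 1%g = e by rewrite -(cfRes1 A) eRes cfunE lin_char1 // mulr1.
  by rewrite h1 normrM normC_lin_char // mulr1 -h2 chi1 normr_nat.
pose T := 'I_X['chi_t]%G.
have sTX : (T \subset X)%g := Inertia_sub _ _.
have [_ _ imB _ _] := constt_Inertia_bijection t nsAX.
have iB : i \in irr_constt ('Ind[X] 'chi_t) by rewrite constt_Ind_Res.
have := imB i; rewrite iB => /imsetP[s sA ei].
have [irrInd _ _ _ _] := constt_Inertia_bijection t nsAX.
have chiE : 'chi_i = 'Ind[X] 'chi_s by rewrite ei /Ind_Iirr cfIirrE // irrInd.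
have [n sn] := natrP (Cnat_irr1 s).
have pE : p = (#|X : T| * n)%N.
  apply/eqP; rewrite -(eqr_nat algC) natrM -sn -cfInd1 // -chiE chi1.
  by [].
have iT1 : (1 < #|X : T|)%N by rewrite indexg_gt1 subsetI subxx.
have iTp : #|X : T| = p.
  apply/(prime_nt_dvdP p_pr); first by rewrite neq_ltn iT1 orbT.
  by rewrite pE dvdn_mulr.
have n1 : n = 1%N.
  by move: pE; rewrite iTp -{1}(muln1 p) => /eqP; rewrite eqn_pmul2l ?prime_gt0 // => /eqP <-.
have nsTX : (T <| X)%g by apply: (p_maximal_normal pX); apply: p_index_maximal; rewrite ?iTp.
have sX'T : (X^`(1) \subset T)%g.
  apply: der1_min (normal_norm nsTX) _.
  by rewrite cyclic_abelian // prime_cyclic // card_quotient ?normal_norm ?iTp.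
have linS : 'chi_s \is a linear_char by rewrite qualifE /= irr_char /= sn n1.
have kerE : cfker 'chi_i = gcore (cfker 'chi_s) X by rewrite chiE cfker_Ind_irr.
apply: subset_trans ffi.
rewrite kerE; apply: subset_trans (dergS 1 sX'T) _.
apply: gcore_max; first exact: lin_char_der1.
exact: char_norm_trans (der_char 1 T) (normal_norm nsTX).
Qed.

Lemma M1 (gT : finGroupType) (p : nat) (X : {group gT}) (i : Iirr X) :
  prime p -> p.-group X -> 'chi_i 1%g = p%:R ->
  (X^`(2) \subset cfker 'chi_i)%g.
Proof.
move=> p_pr pX chi1.
have nsK := cfker_normal 'chi_i.
have jE := quo_IirrE nsK (subxx _).
have ffj : cfaithful 'chi_(quo_Iirr (cfker 'chi_i) i) by rewrite jE cfaithful_quo.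
have j1 : 'chi_(quo_Iirr (cfker 'chi_i) i) 1%g = p%:R by rewrite jE cfQuo1.
have := M0 p_pr (quotient_pgroup _ pX) ffj j1.
rewrite -quotient_der ?normal_norm // quotient_sub1 //.
exact: subset_trans (der_sub 2 X) (normal_norm nsK).
Qed.


Lemma degs (gT : finGroupType) (p : nat) (X : {group gT}) (i : Iirr X) :
  prime p -> #|X| = (p ^ 6)%N ->
  let d := irr_degree (socle_of_Iirr i) in
  [\/ d = 1%N, d = p | d = (p ^ 2)%N].
Proof.
move=> p_pr oX d.
have dE : 'chi_i 1%g = d%:R := irr1_degree i.
have := dvd_irr1_cardG i; rewrite dE oX dvdC_nat => /(@dvdn_pfactor p d 6%N p_pr) [k k6 dk].
have S : (\sum_(j : Iirr X) (irr_degree (socle_of_Iirr j)) ^ 2 = #|X|)%N.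
  apply/eqP; rewrite -(eqr_nat algC) natr_sum -irr_sum_square.
  by apply/eqP/eq_bigr => j _; rewrite natrX irr1_degree.
have [ei|nz] := eqVneq i 0.
  by constructor 1; apply/eqP; rewrite -(eqr_nat algC) -dE ei irr0 cfun11.
have le : (1 + d ^ 2 <= p ^ 6)%N.
  rewrite -oX -S (bigD1 (0 : Iirr X)) //= (bigD1 i) //=.
  have -> : irr_degree (socle_of_Iirr (0 : Iirr X)) = 1%N.
    by apply/eqP; rewrite -(eqr_nat algC) -irr1_degree irr0 cfun11.
  by rewrite exp1n addnA leq_addr.
have k2 : (k <= 2)%N.
  have : (p ^ (2 * k) < p ^ 6)%N by rewrite mulnC expnM -dk.
  rewrite ltn_exp2l ?prime_gt1 //; lia.
by move: k2 dk; case: k {k6} => [|[|[|]]] // _ ->; [constructor 1 | constructor 2; rewrite expn1 | constructor 3].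
Qed.

Theorem mainTheorem6 (gT : finGroupType) (p : nat) (P G : {group gT}) (a : gT) :
  prime p ->
  #|G| = (p ^ 5)%N ->
  #[a]%g = p ->
  ~~ (a \in 'C(G))%g ->
  (G ><| <[a]> = P)%g ->
  (P^`(2) != 1)%g ->
  has_derived_length P 3 /\
  cd P =i [:: 1%R; (p%:R)%R; ((p ^ 2)%N%:R)%R].
Proof.
move=> p_pr oG oa _ sdP nt2.
have oP : #|P| = (p ^ 6)%N by rewrite -(sdprod_card sdP) oG -orderE oa -expnSr.
have pP : p.-group P by rewrite /pgroup oP pnatX pnat_id.
have d3 := L2 p_pr pP oP.
split.
  apply/andP; split; first by rewrite d3.
  apply/forallP => -[[|[|[|]]] //= _].
  - by apply: contra nt2 => /eqP e; rewrite -subG1 -e der_sub.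
  - by apply: contra nt2 => /eqP e; rewrite -subG1 -e (der_sub 1 P^`(1)).
pose d (i : Iirr P) := irr_degree (socle_of_Iirr i).
have dE i : 'chi_i 1%g = (d i)%:R := irr1_degree i.
have D i : [\/ d i = 1%N, d i = p | d i = (p ^ 2)%N] := degs i p_pr oP.
have nt1 : (P^`(1) != 1)%g.
  by apply: contra nt2 => /eqP e; rewrite -subG1 /= -e (der_sub 1 P^`(1)).
have exp : [exists i, d i == p].
  apply: contraT; rewrite negb_exists => /forallP /= nop.
  have S : (\sum_(j : Iirr P) d j ^ 2 = #|P|)%N.
    apply/eqP; rewrite -(eqr_nat algC) natr_sum -irr_sum_square.
    by apply/eqP/eq_bigr => j _; rewrite natrX dE.
  rewrite (bigID (fun j => d j == 1%N)) /= in S.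
  have S1 : (\sum_(j | true && (d j == 1%N)) d j ^ 2 = #|P : P^`(1)|)%N.
    rewrite (eq_bigr (fun _ => 1%N)); last by move=> j /andP[_ /eqP->].
    rewrite -card_lin_irr -sum1_card; apply: eq_bigl => j.
    by rewrite inE qualifE /= irr_char /= dE pnatr_eq1.
  have S2 : (p ^ 4 %| \sum_(j | true && (d j != 1%N)) d j ^ 2)%N.
    apply: dvdn_sum => j /= nj.
    case: (D j) => [e | e | ->]; first by rewrite e eqxx in nj.
      by move/eqP: (nop j); rewrite e.
    by rewrite -expnM.
  have p4 : (p ^ 4 %| #|P : P^`(1)|)%N.
    by rewrite -S1 -(dvdn_addl _ S2) S oP dvdn_exp2l.
  have p2 := L1 (pgroupS (der_sub 1 P) pP) (introN derG1P (elimN eqP nt2)).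
  have [_ p1 _] := pgroup_pdiv (pgroupS (der_sub 2 P) pP) nt2.
  have : (p ^ 7 %| p ^ 6)%N.
    rewrite -oP -(Lagrange (der_sub 1 P)) -(Lagrange (der_sub 1 P^`(1))).
    rewrite (_ : 7 = 1 + 2 + 4)%N // !expnD expn1.
    by rewrite !dvdn_mul.
  by rewrite dvdn_Pexp2l ?prime_gt1.
have exp2 : [exists i, d i == (p ^ 2)%N].
  apply: contraT; rewrite negb_exists => /forallP /= nop2.
  suff : (P^`(2) \subset [1 gT])%g by rewrite subG1 (negPf nt2).
  rewrite -(TI_cfker_irr P); apply/bigcapsP => i _.
  case: (D i) => e.
  - have lin : 'chi_i \is a linear_char by rewrite qualifE /= irr_char /= dE e.
    exact: subset_trans (der_sub 1 P^`(1)) (lin_char_der1 lin).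
  - by apply: M1 p_pr pP _; rewrite dE e.
  - by move: (nop2 i); rewrite e eqxx.
move=> x; rewrite /cd !inE; apply/existsP/idP.
  by case=> i /eqP <-; rewrite dE; case: (D i) => ->; rewrite ?eqxx ?orbT.
case/or3P => /eqP ->.
- by exists 0; rewrite irr0 cfun11.
- by have [i /eqP di] := existsP exp; exists i; rewrite dE di.
- by have [i /eqP di] := existsP exp2; exists i; rewrite dE di.
Qed.
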